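(* Let $d\in\mathbb{N}$ and let $\mathbb{N}^{1/d}$ denote the set of positive real $d$-th roots of all natural numbers. Then \[ B(0,d)=\begin{cases}\mathbb{N}^{1/d}\setminus\{1\} & \text{if } d\notin\phi(\mathbb{N}),\\ \mathbb{N}^{1/d} & \text{if } d\in\phi(\mathbb{N}),\end{cases}\qquad B(d,d)=\begin{cases}\mathbb{N}^{1/d}\setminus\{1\} & \text{if } d>1,\\ \mathbb{N}^{1/d} & \text{if } d=1,\end{cases}\] where $\phi$ is Euler's phi function.
   Context: $\bar{\mathbb{Q}}$ is the algebraic closure of $\mathbb{Q}$ in $\mathbb{C}$. For $\alpha\in\bar{\mathbb{Q}}$ of degree $d$, let $a_0>0$ be the leading coefficient of a minimal polynomial of $\alpha$ in $\mathbb{Z}[t]$ and $\alpha_1,\dots,\alpha_d$ its conjugates; $H(\alpha)=\big(a_0\prod_{i=1}^d\max\{1,|\alpha_i|\}\big)^{1/d}$ is the absolute multiplicative Weil height. For $k\in\{0,\dots,d\}$, $A(k,d)$ is the set of $\alpha\in\mathbb{C}$ with $[\mathbb{Q}(\alpha):\mathbb{Q}]=d$ having precisely $k$ conjugates in the open unit disk, and $B(k,d)=\{H(\alpha):\alpha\in A(k,d)\}$. *)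

(* Defs.v *)
From HB Require Import structures.
From mathcomp Require Import all_boot all_order all_algebra all_field.
Set Implicit Arguments. Unset Strict Implicit. Unset Printing Implicit Defensive.
Import Order.TTheory GRing.Theory Num.Theory.
Local Open Scope ring_scope.

Definition degC (z : algC) : nat := (size (minCpoly z)).-1.

(* the conjugates alpha_1, ..., alpha_d of z: the roots of its minimal
   polynomial, listed with multiplicity (all simple) *)
Definition conjugates (z : algC) : seq algC :=
  sval (closed_field_poly_normal (minCpoly z)).

(* p is "a minimal polynomial of z in Z[t]" with positive leading coefficient:
   a primitive integer polynomial (content 1, positive leading coefficient)
   proportional to the minimal polynomial of z over Q. *)
Definition Zminpoly (z : algC) (p : {poly int}) : Prop :=
  zcontents p = 1 /\
  map_poly (fun a : int => a%:~R : algC) p = (lead_coef p)%:~R *: minCpoly z.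

(* absolute multiplicative Weil height, given the leading coefficient a0 *)
Definition heightC (z : algC) (a0 : int) : algC :=
  (degC z).-root (a0%:~R * \prod_(a <- conjugates z) Num.max 1 `|a|).

Definition Aset (k d : nat) (z : algC) : Prop :=
  degC z = d /\ count (fun a : algC => `|a| < 1) (conjugates z) = k.

Definition Bset (k d : nat) (h : algC) : Prop :=
  exists (z : algC) (p : {poly int}),
    Aset k d z /\ Zminpoly z p /\ h = heightC z (lead_coef p).

Definition Nroot (d : nat) (h : algC) : Prop :=
  exists n : nat, (0 < n)%N /\ h = d.-root (n%:R : algC).

Definition in_totient_image (d : nat) : Prop :=
  exists n : nat, (0 < n)%N /\ totient n = d.

(* Main.v *)
Require Import Defs.
From HB Require Import structures.
From mathcomp Require Import all_boot all_order all_algebra all_field.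
Set Implicit Arguments. Unset Strict Implicit. Unset Printing Implicit Defensive.
Import Order.TTheory GRing.Theory Num.Theory.
Local Open Scope ring_scope.
Local Notation pQtoC := (map_poly (ratr : rat -> algC)).
Local Notation pZtoC := (map_poly (intr : int -> algC)).
Local Notation pZtoQ := (map_poly (intr : int -> rat)).


Lemma aut_exists (x y : algC) : root (minCpoly x) y ->
  exists nu : {rmorphism algC -> algC}, nu x = y.
Proof.
move=> ry.
have [p [Dp mon_p] dv_p] := minCpolyP x.
have [r Dr] := closed_field_poly_normal (pQtoC p : {poly algC}).
rewrite lead_coef_map (monicP mon_p) rmorph1 scale1r in Dr.
have xr : x \in r by rewrite -root_prod_XsubC -Dr -Dp root_minCpoly.
have yr : y \in r by rewrite -root_prod_XsubC -Dr -Dp.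
have [Qr [QrC [rr Drr genQr]]] := num_field_exists r.
have [xx Dxx] : {xx | QrC xx = x}.
  by move: xr; rewrite -Drr => /mapP/sig2_eqW[xx]; exists xx.
have [yy Dyy] : {yy | QrC yy = y}.
  by move: yr; rewrite -Drr => /mapP/sig2_eqW[yy]; exists yy.
have Sinj_poly (q : {poly rat}) :
    map_poly QrC (map_poly (in_alg Qr) q) = pQtoC q.
  rewrite -map_poly_comp; apply: eq_map_poly => a.
  by rewrite /= rmorphZ_num rmorph1 mulr1.
pose q := minPoly 1 xx.
have [q1 Dq1]: exists q1, map_poly QrC q = pQtoC q1.
  have aP i: q`_i \in 1%VS by apply/polyOverP; apply: minPolyOver.
  have a_ i := sig_eqW (vlineP _ _ (aP i)).
  exists (\poly_(i < size q) sval (a_ i)).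
  apply/polyP=> i; rewrite coef_poly coef_map coef_poly /=.
  case: ifP => _; rewrite ?rmorph0 //; case: (a_ i) => a /= ->.
  by rewrite alg_num_field fmorph_rat.
have qyy : root q yy.
  have : root (pQtoC q1) x by rewrite -Dq1 -Dxx fmorph_root root_minPoly.
  rewrite dv_p => /dvdpP[s Ds].
  have : root (pQtoC q1) y by rewrite Ds rmorphM rootM /= -Dp ry orbT.
  by rewrite -Dq1 -Dyy fmorph_root.
have hom1 : kHom 1 1 (\1%VF : 'End(Qr)) by rewrite kHom1.
have fPx : root (map_poly (\1%VF : 'End(Qr)) (minPoly 1 xx)) yy.
  rewrite (eq_map_poly (fun z => id_lfunE z)) map_poly_id //.
pose f := kHomExtend 1 \1 xx yy.
have homf : kHom 1 <<1; xx>> f := kHomExtendP (subvv _) hom1 fPx.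
pose pr := map_poly (in_alg Qr) p.
have Qpr: pr \is a polyOver 1%VS.
  by apply/polyOverP=> i; rewrite coef_map memvZ ?memv_line.
have split1 : splittingFieldFor 1 pr fullv.
  exists rr => //.
  congr (_ %= _): (eqpxx pr); apply/(map_poly_inj QrC).
  rewrite Sinj_poly Dr -Drr big_map rmorph_prod /=; apply: eq_bigr => zz _.
  by rewrite map_polyXsubC.
have splitx : splittingFieldFor <<1; xx>> pr fullv.
  exact: splittingFieldForS (sub1v _) (subvf _) split1.
have [g homg Dg] := kHom_extends (sub1v _) homf Qpr splitx.
pose gmM := GRing.isMonoidMorphism.Build _ _ g (kHom_monoid_morphism homg).
pose gR : {rmorphism Qr -> Qr} := HB.pack (fun_of_lfun g) gmM.
have [nu Dnu] := extend_algC_subfield_aut QrC gR.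
exists nu; rewrite -Dxx -Dnu /= -Dg ?memv_adjoin //.
by rewrite /f (kHomExtend_val hom1 fPx) Dyy.
Qed.

Lemma conjE z : minCpoly z = \prod_(a <- conjugates z) ('X - a%:P).
Proof.
rewrite /conjugates; case: closed_field_poly_normal => r /= Dr.
by rewrite {1}Dr (monicP (minCpoly_monic z)) scale1r.
Qed.

Lemma mem_conj z y : (y \in conjugates z) = root (minCpoly z) y.
Proof. by rewrite conjE root_prod_XsubC. Qed.

Lemma size_conj z : size (conjugates z) = degC z.
Proof. by rewrite /degC conjE size_prod_XsubC. Qed.

Lemma degC_gt0 z : (0 < degC z)%N.
Proof. by rewrite /degC -subn1 subn_gt0 size_minCpoly. Qed.

Lemma uniq_conj z : uniq (conjugates z).
Proof.
rewrite -separable_prod_XsubC -conjE.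
have [p [Dp mon_p] dv_p] := minCpolyP z.
rewrite Dp unlock deriv_map coprimep_map.
have p0 : p != 0 by apply: monic_neq0.
have sp : (1 < size p)%N by rewrite -(size_map_poly (ratr : rat -> algC)) -Dp size_minCpoly.
have dp0 : p^`() != 0.
  apply/eqP => H; have := congr1 (fun q : {poly rat} => q`_(size p).-2) H.
  have e : ((size p).-2.+1 = (size p).-1)%N by case: (size p) sp => // -[].
  rewrite coef_deriv coef0 e -lead_coefE.
  move/eqP; rewrite mulrn_eq0 lead_coef_eq0 (negPf p0) orbF.
  by case: (size p) sp => // -[].
rewrite /coprimep; apply: contraT => ng.
have [w rw] : exists w, root (pQtoC (gcdp p p^`())) w.
  by apply/closed_rootP; rewrite size_map_poly.
have wp : root (minCpoly z) w.
  by rewrite Dp; apply: root_dvdp rw; rewrite dvdp_map dvdp_gcdl.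
have wp' : root (pQtoC p^`()) w.
  by apply: root_dvdp rw; rewrite dvdp_map dvdp_gcdr.
have [nu Dnu] := aut_exists wp.
have zp' : root (pQtoC p^`()) z.
  rewrite -(fmorph_root nu) -map_poly_comp (eq_map_poly (fmorph_rat nu)) Dnu //.
move: zp'; rewrite dv_p => /(dvdp_leq dp0).
by rewrite leqNgt lt_size_deriv.
Qed.

Lemma coef_prod_bound (s : seq algC) i :
  (forall b, b \in s -> `|b| <= 1) ->
  `|(\prod_(b <- s) ('X - b%:P))`_i| <= (2 ^ size s)%:R.
Proof.
elim: s i => [|b s IH] i Hs.
  rewrite big_nil coef1 expn0; case: (i == 0)%N; by rewrite ?normr1 ?normr0.
have Hs' : forall c, c \in s -> `|c| <= 1.
  by move=> c cs; apply: Hs; rewrite in_cons cs orbT.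
have Hb : `|b| <= 1 by apply: Hs; rewrite in_cons eqxx.
rewrite big_cons mulrBl coefB coefXM coefCM /= expnS natrM mulr2n mulrDl mul1r.
apply: (le_trans (ler_normB _ _)); apply: lerD.
  by case: (i == 0)%N; rewrite ?normr0 ?ler0n ?IH.
rewrite normrM -[X in _ <= X]mul1r; apply: ler_pM => //.
exact: IH.
Qed.

Lemma conj_pow_norm x k y : (forall t, t \in conjugates x -> `|t| = 1) ->
  y \in conjugates (x ^+ k) ->
  exists2 t, t \in conjugates x & y = t ^+ k.
Proof.
move=> Hx; rewrite mem_conj => /aut_exists[nu Dnu].
exists (nu x); last by rewrite -Dnu rmorphXn.
by rewrite mem_conj -(minCpoly_aut nu) root_minCpoly.
Qed.

Lemma kronecker x : minCpoly x \is a polyOver Num.int ->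
  (forall y, y \in conjugates x -> `|y| = 1) ->
  exists2 n, (0 < n)%N & x ^+ n = 1.
Proof.
move=> Zx Hx.
have Ax : x \in Aint by [].
set d := degC x; set M := (2 ^ d)%N.
have x0 : x != 0.
  have : x \in conjugates x by rewrite mem_conj root_minCpoly.
  by move/Hx => nx; apply/eqP => x0; move: nx; rewrite x0 normr0 => /eqP; rewrite eq_sym oner_eq0.
pose m k := minCpoly (x ^+ k).
have mZ k : m k \is a polyOver Num.int.
  have : x ^+ k \in Aint by apply: rpredX.
  by [].
have msize k : (size (m k) <= d.+1)%N.
  rewrite /m conjE size_prod_XsubC ltnS /d -size_conj.
  have -> : size (conjugates x) = size (map (fun t => t ^+ k) (conjugates x)) by rewrite size_map.
  apply: uniq_leq_size; first exact: uniq_conj.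
  move=> y /conj_pow_norm[] // t tc ->; exact: map_f.
have mbound k i : `|(m k)`_i| <= M%:R.
  rewrite /m conjE; apply: le_trans (coef_prod_bound _ _) _.
    move=> y /conj_pow_norm[] // t /Hx tn ->; by rewrite normrX tn expr1n.
  rewrite ler_nat leq_pexp2l //.
  rewrite size_conj /degC.
  have := msize k; rewrite /m; case: (size (minCpoly (x ^+ k))) => //.
pose T := {ffun 'I_d.+1 -> 'I_(M + M).+1}.
pose P (c : T) : {poly algC} := \poly_(i < d.+1) ((c (inord i))%:R - M%:R).
pose Big := \prod_(c : T | P c != 0) P c.
have Big0 : Big != 0 by apply/prodf_neq0 => c.
have rootBig k : root Big (x ^+ k).
  have [c Pc] : exists c : T, P c = m k.
    have zi (i : nat) : {z : int | (m k)`_i = z%:~R}.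
      by apply: sig_eqW; apply/intrP; move/polyOverP: (mZ k); apply.
    exists [ffun i : 'I_d.+1 => inord (absz (sval (zi i) + M%:Z))].
    apply/polyP => i; rewrite coef_poly.
    case: ltnP => [lti | gei]; last first.
      by apply/esym/nth_default; apply: leq_trans (msize k) gei.
    rewrite ffunE /= (inordK lti); case: (zi i) => z /= Dz.
    have zb : `|z| <= M%:Z.
      by have := mbound k i; rewrite Dz -intr_norm -(ler_int algC).
    have z0 : 0 <= z + M%:Z.
      by move: zb; rewrite ler_norml => /andP[h _]; rewrite -(addNr M%:Z) lerD2r.
    rewrite inordK; last first.
      rewrite ltnS -lez_nat gez0_abs // PoszD lerD2r.
      exact: le_trans (ler_norm _) zb.
    by rewrite Dz natr_absz ger0_norm // rmorphD /= addrK.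
  have mk0 : m k != 0 by rewrite minCpoly_eq0.
  rewrite /Big (bigD1 c) /=; last by rewrite Pc.
  by rewrite rootE hornerM Pc (rootP (root_minCpoly _)) mul0r.
pose N := size Big.
have [/existsP[k /eqP xk] | nk] := boolP [exists k : 'I_N, x ^+ k.+1 == 1].
  by exists k.+1.
have : uniq [seq x ^+ k.+1 | k <- iota 0 N].
  rewrite map_inj_in_uniq ?iota_uniq // => i j.
  rewrite !mem_iota !add0n !leq0n /= => iN jN eij.
  wlog lij : i j iN jN eij / (i <= j)%N.
    move=> H; case: (leqP i j) => [|/ltnW] lij; first exact: H.
    by apply/esym/H.
  case: (ltnP i j) => [ltij|ji]; last by apply/eqP; rewrite eqn_leq lij ji.
  exfalso; move/negP: nk; apply; apply/existsP.
  have jiN : ((j - i).-1 < N)%N.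
    by rewrite (leq_ltn_trans _ jN) // (leq_trans (leq_pred _)) ?leq_subr.
  exists (Ordinal jiN) => /=.
  have e : ((j - i).-1.+1 = j - i)%N by rewrite prednK // subn_gt0.
  rewrite e; apply/eqP.
  apply: (mulIf (expf_neq0 i.+1 x0)); rewrite mul1r -exprD addnS subnK 1?eij //.
move=> U.
have A : all (root Big) [seq x ^+ k.+1 | k <- iota 0 N].
  by apply/allP => y /mapP[k _ ->].
by have := max_poly_roots Big0 A U; rewrite size_map size_iota ltnn.
Qed.


Lemma pZtoQtoC (f : {poly int}) : pQtoC (pZtoQ f) = pZtoC f.
Proof. by rewrite -map_poly_comp; apply: eq_map_poly => b /=; rewrite ratr_int. Qed.

Lemma size_minCpolyE z : size (minCpoly z) = (degC z).+1.
Proof. by rewrite /degC prednK // ltnW // size_minCpoly. Qed.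

Lemma Zmin_of_deg (f : {poly int}) z : zcontents f = 1 ->
  root (pZtoC f) z -> degC z = (size f).-1 -> Zminpoly z f.
Proof.
move=> cf rf df; split => //.
have f0 : f != 0 by rewrite -zcontents_eq0 cf oner_eq0.
have [p [Dp mon_p] dv_p] := minCpolyP z.
have dv : p %| pZtoQ f by rewrite -dv_p pZtoQtoC.
have sp : size p = size f.
  rewrite -(size_map_poly (ratr : {rmorphism rat -> algC}) p) -Dp.
  by rewrite size_minCpolyE df prednK // size_poly_gt0.
have e : p %= pZtoQ f.
  by rewrite -dvdp_size_eqp // (size_map_inj_poly (@intr_inj _) (rmorph0 _)) sp.
have := eqpfP ((etrans (eqp_sym _ _) e)); rewrite (monicP mon_p) divr1 => /(congr1 pQtoC).
rewrite map_polyZ /= -Dp pZtoQtoC => ->.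
by rewrite lead_coef_map_inj ?ratr_int //; apply: intr_inj.
Qed.

Lemma degC_irr (f : {poly int}) z : irreducible_poly f ->
  root (pZtoC f) z -> degC z = (size f).-1.
Proof.
move=> irr rf; have irrQ := (irreducible_rat_int f).2 irr.
have [p [Dp mon_p] dv_p] := minCpolyP z.
have dv : p %| pZtoQ f by rewrite -dv_p pZtoQtoC.
have sp1 : size p != 1%N.
  rewrite -(size_map_poly (ratr : {rmorphism rat -> algC}) p) -Dp.
  by rewrite neq_ltn size_minCpoly orbT.
have /eqp_size sp := irrQ.2 p sp1 dv.
rewrite /degC Dp (size_map_poly (ratr : {rmorphism rat -> algC}) p) sp.
by rewrite (size_map_inj_poly (@intr_inj _) (rmorph0 _)).
Qed.

Lemma degC_inv_le z : z != 0 -> (degC z^-1 <= degC z)%N.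
Proof.
move=> z0.
have [p [Dp mon_p] dv_p] := minCpolyP z.
set n := (size p).-1.
have sp : size p = n.+1.
  rewrite /n prednK // -(size_map_poly (ratr : {rmorphism rat -> algC}) p) -Dp.
  by rewrite ltnW // size_minCpoly.
pose q := \poly_(i < n.+1) p`_(n - i).
have q0 : q != 0.
  apply/eqP => /(congr1 (fun r : {poly rat} => r`_0)); rewrite coef_poly /= subn0.
  by rewrite coef0 -/n => /eqP; rewrite /n -lead_coefE (monicP mon_p) oner_eq0.
have rq : root (pQtoC q) z^-1.
  have pz : (pQtoC p).[z] = 0 by rewrite -Dp; apply/rootP; apply: root_minCpoly.
  have E : (pQtoC q).[z^-1] * z ^+ n = (pQtoC p).[z].
    rewrite (horner_coef_wide _ (n := n.+1)); last first.
      by rewrite (size_map_poly (ratr : {rmorphism rat -> algC})) size_poly.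
    rewrite (horner_coef_wide _ (n := n.+1)); last first.
      by rewrite (size_map_poly (ratr : {rmorphism rat -> algC})) sp.
    rewrite mulr_suml (reindex_inj rev_ord_inj) /=; apply: eq_bigr => i _.
    have ilen : (i <= n)%N by rewrite -ltnS ltn_ord.
    rewrite subSS !coef_map coef_poly ltnS leq_subr subKn // -mulrA.
    congr (_ * _).
    have -> : z ^+ n = z ^+ (n - i) * z ^+ i by rewrite -exprD subnK.
    by rewrite mulrA exprVn mulVf ?mul1r // expf_neq0.
  apply/rootP; apply/eqP; move: E; rewrite pz => /eqP.
  by rewrite mulf_eq0 expf_eq0 (negPf z0) andbF orbF.
have [p' [Dp' mon_p'] dv_p'] := minCpolyP z^-1.
have : p' %| q by rewrite -dv_p'.
move/(dvdp_leq q0) => le.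
rewrite /degC Dp' (size_map_poly (ratr : {rmorphism rat -> algC})) -/n.
rewrite Dp (size_map_poly (ratr : {rmorphism rat -> algC})) sp /=.
by move: (leq_trans le (size_poly _ _)); case: (size p').
Qed.

Lemma degC_inv z : z != 0 -> degC z^-1 = degC z.
Proof.
move=> z0; apply/eqP; rewrite eqn_leq degC_inv_le //.
by rewrite -{1}(invrK z) degC_inv_le // invr_eq0.
Qed.

Definition binom (a b : int) (d : nat) : {poly int} := a *: 'X^d + b%:P.

Section Binom.
Variables (a b : int) (d : nat).
Hypotheses (d0 : (0 < d)%N) (a0 : a != 0).

Lemma size_binom : size (binom a b d) = d.+1.
Proof.
have sX : size (a *: 'X^d : {poly int}) = d.+1 by rewrite size_scale // size_polyXn.
by rewrite /binom size_polyDl sX // ltnS (leq_trans (size_polyC_leq1 _)).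
Qed.

Lemma lead_binom : lead_coef (binom a b d) = a.
Proof.
have sX : size (a *: 'X^d : {poly int}) = d.+1 by rewrite size_scale // size_polyXn.
rewrite /binom lead_coefDl ?lead_coefZ ?lead_coefXn ?mulr1 //.
by rewrite sX ltnS (leq_trans (size_polyC_leq1 _)).
Qed.

Lemma coef_binom i : (binom a b d)`_i = if i == 0%N then b else if i == d then a else 0.
Proof.
rewrite /binom coefD coefZ coefXn coefC.
have [->|i0] := eqVneq i 0%N.
  by rewrite eq_sym (gtn_eqF d0) /= mulr0 add0r.
by rewrite /= addr0; case: eqP => _; rewrite ?mulr1 ?mulr0.
Qed.

Lemma horner_binom (z : algC) : (pZtoC (binom a b d)).[z] = a%:~R * z ^+ d + b%:~R.
Proof.
by rewrite /binom -mul_polyC rmorphD rmorphM /= map_polyXn !map_polyC !hornerE.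
Qed.

Lemma binom_eisenstein (P : nat) : prime P -> ~~ (P %| a)%Z -> (P %| b)%Z ->
  ~~ (P ^+ 2 %| b)%Z -> irreducible_poly (binom a b d).
Proof.
move=> pP na db nb; apply: (eisenstein_crit pP).
    by rewrite size_binom eqSS -lt0n.
  by have -> := lead_binom.
  by have -> := coef_binom 0.
move=> i; rewrite size_binom /= => lt_id; have -> := coef_binom i.
by case: eqP => // _; rewrite (ltn_eqF lt_id) dvdz0.
Qed.

Lemma zcontents_binom : 0 < a -> coprimez a b -> zcontents (binom a b d) = 1.
Proof.
move=> apos cop.
set c := zcontents _.
have : (c %| c)%Z by [].
rewrite {2}/c dvdz_contents => /polyOverP Hc.
have ca : (c %| a)%Z by have := Hc d; rewrite coef_binom eqxx eqn0Ngt d0.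
have cb : (c %| b)%Z by have := Hc 0%N; rewrite coef_binom.
have : (c %| gcdz a b)%Z by rewrite dvdz_gcd ca cb.
move/eqP: cop => ->; rewrite dvdzE dvdn1 => /eqP c1.
have sc : sgz c = 1 by rewrite /c sgz_contents lead_binom gtr0_sgz.
by rewrite [c]intEsg sc c1.
Qed.

End Binom.

Lemma Zmin_root z p a : Zminpoly z p -> a \in conjugates z -> root (pZtoC p) a.
Proof.
move=> [cp E] az.
have p0 : p != 0 by rewrite -zcontents_eq0 cp oner_eq0.
have : root (map_poly (fun t : int => t%:~R : algC) p) a.
  by rewrite E rootZ -?mem_conj // intr_eq0 lead_coef_eq0.
by [].
Qed.

Lemma binom_B (a b : int) d : (0 < d)%N -> 0 < a -> 0 < b -> coprimez a b ->
  irreducible_poly (binom a b d) \/ irreducible_poly (binom b a d) ->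
  exists z, Zminpoly z (binom a b d).
Proof.
move=> d0 apos bpos cop irr.
have a0 : a != 0 by rewrite gt_eqF.
have b0 : b != 0 by rewrite gt_eqF.
have [z rz] : exists z, root (pZtoC (binom a b d)) z.
  apply/closed_rootP; rewrite (size_map_inj_poly (@intr_inj _) (rmorph0 _)).
  by rewrite size_binom // eqSS -lt0n.
exists z; apply: Zmin_of_deg => //; first exact: zcontents_binom.
rewrite size_binom //=.
case: irr => irr; first by rewrite (degC_irr irr rz) size_binom.
have E := rootP rz; rewrite horner_binom // in E.
have z0 : z != 0.
  apply/eqP => z0; move: E; rewrite z0 expr0n gtn_eqF // mulr0 add0r => /eqP.
  by rewrite intr_eq0 (negPf b0).
have zd : z ^+ d != 0 by rewrite expf_neq0.
rewrite -degC_inv // (degC_irr irr) ?size_binom //.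
apply/rootP; rewrite horner_binom //.
apply: (mulIf zd); rewrite mul0r mulrDl -mulrA exprVn mulVf // mulr1 addrC.
exact: E.
Qed.


Lemma lead_pos z p : Zminpoly z p -> 0 < lead_coef p.
Proof. by case=> cp _; rewrite -sgz_gt0 -sgz_contents cp. Qed.

Lemma coef0_Zmin z p : Zminpoly z p ->
  (p`_0)%:~R = (lead_coef p)%:~R * ((-1) ^+ degC z * \prod_(a <- conjugates z) a).
Proof.
case=> _ E; have := congr1 (fun q : {poly algC} => q`_0) E.
by rewrite /= coefZ {1}conjE coef0_prod_XsubC size_conj coef_map.
Qed.

Lemma height_out z p : Zminpoly z p ->
  (forall a, a \in conjugates z -> 1 <= `|a|) ->
  heightC z (lead_coef p) = (degC z).-root ((absz p`_0)%:R) /\ (0 < absz (p`_0)%R)%N.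
Proof.
move=> Zp H.
have lp := lead_pos Zp.
have E : (lead_coef p)%:~R * \prod_(a <- conjugates z) Num.max 1 `|a| = `|(p`_0)%:~R : algC|.
  rewrite (coef0_Zmin Zp) normrM normrM normrX normrN1 expr1n mul1r normr_prod.
  rewrite -intr_norm gtr0_norm //; congr (_ * _).
  by rewrite big_seq_cond [RHS]big_seq_cond; apply: eq_bigr => a /andP[/H h _]; rewrite max_r.
split; first by rewrite /heightC E -intr_norm natr_absz.
rewrite absz_gt0; apply/eqP => p00.
move: (coef0_Zmin Zp); rewrite p00 /= => /esym/eqP.
rewrite mulf_eq0 intr_eq0 (gt_eqF lp) /= mulf_eq0 expf_eq0 oppr_eq0 oner_eq0 andbF /=.
rewrite prodf_seq_eq0 => /hasP[a /H h /= /eqP a0].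
by move: h; rewrite a0 normr0 ler10.
Qed.

Lemma height_in z p : Zminpoly z p ->
  (forall a, a \in conjugates z -> `|a| < 1) ->
  heightC z (lead_coef p) = (degC z).-root ((absz (lead_coef p))%:R) /\
  (0 < absz (lead_coef p))%N.
Proof.
move=> Zp H; have lp := lead_pos Zp.
split; last by rewrite absz_gt0 gt_eqF.
rewrite /heightC big_seq big1 ?mulr1 => [|a /H h]; last by rewrite max_l // ltW.
by rewrite natr_absz gtr0_norm.
Qed.


Lemma minC0 : minCpoly 0 = 'X.
Proof.
have [p [Dp mon_p] dv_p] := minCpolyP 0.
have : p %| 'X by rewrite -dv_p map_polyX rootX.
move=> dvX.
have sp : (1 < size p)%N.
  by rewrite -(size_map_poly (ratr : {rmorphism rat -> algC}) p) -Dp size_minCpoly.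
have le := dvdp_leq (negbT (polyX_eq0 _)) dvX; rewrite size_polyX in le.
have : p %= 'X by rewrite -dvdp_size_eqp // size_polyX eqn_leq sp le.
rewrite eqp_monic ?monicX // => /eqP pX.
by rewrite Dp pX map_polyX.
Qed.

Lemma degC0 : degC 0 = 1%N.
Proof. by rewrite /degC minC0 size_polyX. Qed.

Lemma prod_ge1 (s : seq algC) : (forall y, y \in s -> 1 <= y) -> 1 <= \prod_(y <- s) y.
Proof.
move=> H; rewrite big_seq; apply: (big_ind (fun v => 1 <= v)) => //.
  by move=> u v; apply: mulr_ege1.
Qed.

Lemma prod_ge1_elem (s : seq algC) x : (forall y, y \in s -> 1 <= y) ->
  x \in s -> x <= \prod_(y <- s) y.
Proof.
elim: s => // y s IH H; rewrite in_cons big_cons => /predU1P[->|xs].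
  rewrite -[X in X <= _]mulr1 ler_pM ?prod_ge1 //.
    by rewrite (le_trans ler01) // H ?mem_head.
  by move=> t ts; apply: H; rewrite in_cons ts orbT.
rewrite -[X in X <= _]mul1r ler_pM ?H ?mem_head //; last first.
  by apply: IH => // t ts; apply: H; rewrite in_cons ts orbT.
have : 1 <= x by apply: H; rewrite in_cons xs orbT.
exact: le_trans ler01.
Qed.

Lemma prod_le1_elem (s : seq algC) x : (forall y, y \in s -> 0 <= y <= 1) ->
  x \in s -> \prod_(y <- s) y <= x.
Proof.
have P0 (t : seq algC) : (forall y, y \in t -> 0 <= y <= 1) -> 0 <= \prod_(y <- t) y <= 1.
  move=> H; rewrite big_seq; apply: (big_ind (fun v => 0 <= v <= 1)) => //.
    by rewrite ler01 lexx.
  move=> u v /andP[u0 u1] /andP[v0 v1]; rewrite mulr_ge0 //.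
  exact: mulr_ile1.
elim: s => // y s IH H.
have H' : forall t, t \in s -> 0 <= t <= 1.
  by move=> t ts; apply: H; rewrite in_cons ts orbT.
rewrite in_cons big_cons => /predU1P[->|xs].
  have /andP[p0 p1] := P0 s H'.
  have /andP[y0 _] := H y (mem_head _ _).
  by rewrite -[X in _ <= X]mulr1 ler_pM.
have /andP[y0 y1] := H y (mem_head _ _).
have /andP[p0 p1] := P0 s H'.
rewrite -[X in _ <= X]mul1r ler_pM //.
exact: IH.
Qed.

Lemma Zmin_deg z p : Zminpoly z p -> degC z = (size p).-1.
Proof.
move=> [cp E].
have p0 : p != 0 by rewrite -zcontents_eq0 cp oner_eq0.
have : size (map_poly (fun t : int => t%:~R : algC) p) = size p.
  exact: (size_map_inj_poly (@intr_inj _) (rmorph0 _)).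
by rewrite E size_scale ?intr_eq0 ?lead_coef_eq0 // size_minCpolyE => <-.
Qed.

Lemma binom_conj (a b : int) d z x : (0 < d)%N -> 0 < a -> 0 < b ->
  Zminpoly z (binom a b d) -> x \in conjugates z -> a%:~R * `|x| ^+ d = b%:~R :> algC.
Proof.
move=> d0 apos bpos Zp /(Zmin_root Zp) /rootP.
rewrite horner_binom // ?gt_eqF // => /eqP; rewrite addr_eq0 => /eqP E.
have := congr1 (fun t : algC => `|t|) E; rewrite /= normrM normrN -normrX.
by rewrite -!intr_norm (gtr0_norm apos) (gtr0_norm bpos) normrX => ->.
Qed.

Lemma binom_Bset (a b : int) d : (0 < d)%N -> 0 < a -> 0 < b -> coprimez a b ->
  irreducible_poly (binom a b d) \/ irreducible_poly (binom b a d) ->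
  (a < b -> Bset 0 d (d.-root (absz b)%:R)) /\ (b < a -> Bset d d (d.-root (absz a)%:R)).
Proof.
move=> d0 apos bpos cop irr.
have [z Zp] := binom_B d0 apos bpos cop irr.
have dz : degC z = d by rewrite (Zmin_deg Zp) size_binom // gt_eqF.
have Hc := binom_conj d0 apos bpos Zp.
have ac : 0 < a%:~R :> algC by rewrite ltr0z.
split => lt.
  have ge1 : forall x, x \in conjugates z -> 1 <= `|x|.
    move=> x xc; rewrite real_leNgt ?realE ?normr_ge0 ?ler01 ?orbT //.
    apply/negP => lt1.
    have := exprn_ile1 d (normr_ge0 x) (ltW lt1).
    move=> h; have : b%:~R <= a%:~R :> algC.
      by rewrite -(Hc x xc) -[X in _ <= X]mulr1 ler_wpM2l // ltW.
    by rewrite ler_int leNgt lt.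
  exists z, (binom a b d); split; [split => //|split => //].
    apply/eqP; rewrite -leqn0 leqNgt -has_count; apply/hasPn => x /ge1 h.
    by rewrite -(real_leNgt (rpred1 _) (normr_real _)).
  have [-> _] := height_out Zp ge1.
  by rewrite dz coef_binom // gt_eqF.
have lt1 : forall x, x \in conjugates z -> `|x| < 1.
  move=> x xc; rewrite real_ltNge ?realE ?normr_ge0 ?ler01 ?orbT //.
  apply/negP => ge1.
  have := exprn_ege1 d ge1.
  move=> h; have : a%:~R <= b%:~R :> algC.
    by rewrite -(Hc x xc) -[X in X <= _]mulr1 ler_wpM2l // ltW.
  by rewrite ler_int leNgt lt.
exists z, (binom a b d); split; [split => //|split => //].
  have : all (fun x : algC => `|x| < 1) (conjugates z) by apply/allP.
  by rewrite all_count size_conj dz => /eqP.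
have [-> _] := height_in Zp lt1.
by rewrite dz lead_binom // gt_eqF.
Qed.

Lemma eis_nat (P n : nat) d : (0 < d)%N -> prime P -> ~~ (P %| n)%N ->
  irreducible_poly (binom n%:Z P%:Z d).
Proof.
move=> d0 pP nPn.
have n0 : n%:Z != 0 by apply: contraNneq nPn => /eqP; rewrite eqz_nat => /eqP ->; rewrite dvdn0.
apply: (binom_eisenstein d0 n0 pP).
    by rewrite dvdzE.
  by rewrite dvdzE dvdnn.
rewrite dvdzE /= expr2; apply/negP => /dvdn_leq.
rewrite prime_gt0 // => /(_ isT); rewrite leqNgt -{1}[P]muln1 ltn_pmul2l ?prime_gt0 //.
by rewrite prime_gt1.
Qed.



Lemma B_ge2 d n : (0 < d)%N -> (1 < n)%N ->
  Bset 0 d (d.-root n%:R) /\ Bset d d (d.-root n%:R).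
Proof.
move=> d0 n1.
have [-> | n2] := eqVneq n 2%N.
  have irr : irreducible_poly (binom 1%N%:Z 2%N%:Z d) by apply: eis_nat.
  split.
    exact: (binom_Bset (a := 1%N%:Z) (b := 2%N%:Z) d0 isT isT isT (or_introl irr)).1 isT.
  exact: (binom_Bset (a := 2%N%:Z) (b := 1%N%:Z) d0 isT isT isT (or_intror irr)).2 isT.
have n3 : (2 < n)%N by rewrite ltn_neqAle eq_sym n2.
have n11 : (1 < n.-1)%N by rewrite -ltnS prednK // (ltn_trans _ n3).
set P := pdiv n.-1.
have pP : prime P := pdiv_prime n11.
have Pd : (P %| n.-1)%N := pdiv_dvd _.
have nPn : ~~ (P %| n)%N.
  apply/negP => Pn; have := dvdn_sub Pn Pd.
  rewrite -{1}(prednK (ltnW (ltnW n3))) subSn // subnn dvdn1 => /eqP P1.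
  by move: pP; rewrite P1.
have Pn : (P < n)%N.
  rewrite (leq_ltn_trans (dvdn_leq _ Pd)) ?prednK ?ltn_predL ?(ltn_trans _ n3) //.
  exact: ltnW n11.
have cop : coprime P n by rewrite prime_coprime.
have irr := eis_nat d0 pP nPn.
have Pp : (0 < P%:Z) by rewrite ltz_nat prime_gt0.
have np : (0 < n%:Z) by rewrite ltz_nat (ltn_trans _ n3).
split.
  have := (binom_Bset (a := P%:Z) (b := n%:Z) d0 Pp np cop (or_intror irr)).1.
  by apply; rewrite ltz_nat.
have := (binom_Bset (a := n%:Z) (b := P%:Z) d0 np Pp _ (or_introl irr)).2.
by apply; rewrite ?ltz_nat // /coprimez /= coprime_sym in cop *.
Qed.


Lemma B_tot d : in_totient_image d -> Bset 0 d 1.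
Proof.
case=> n [n0 <-].
have [z pz] := C_prim_root_exists n0.
exists z, 'Phi_n.
have mz : minCpoly z = pZtoC 'Phi_n by rewrite (minCpoly_cyclotomic pz) (Cintr_Cyclotomic pz).
have l1 : lead_coef 'Phi_n = 1 := monicP (Cyclotomic_monic n).
have Zp : Zminpoly z 'Phi_n.
  split; first exact: zcontents_monic (Cyclotomic_monic n).
  rewrite l1 scale1r mz //.
have dz : degC z = totient n by rewrite /degC (minCpoly_cyclotomic pz) size_cyclotomic.
have n1 : forall x, x \in conjugates z -> `|x| = 1.
  move=> x; rewrite mem_conj => /aut_exists[nu <-].
  apply/eqP; rewrite -(pexpr_eq1 n0) ?normr_ge0 // -normrX -rmorphXn.
  by rewrite (prim_expr_order pz) rmorph1 normr1.
split; first split => //.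
  apply/eqP; rewrite -leqn0 leqNgt -has_count; apply/hasPn => x /n1 ->.
  by rewrite ltxx.
split => //.
rewrite /heightC l1 mul1r big_seq big1 => [|x /n1 ->]; last by rewrite maxxx.
by rewrite rootC1 // dz totient_gt0.
Qed.

Lemma B_d1 : Bset 1 1 1.
Proof.
exists 0, 'X.
have Zp : Zminpoly 0 'X.
  split; first exact: zcontents_monic (monicX _).
  by rewrite lead_coefX scale1r minC0 map_polyX.
have c0 : forall x, x \in conjugates 0 -> x = 0.
  by move=> x; rewrite mem_conj minC0 rootX => /eqP.
split; first split; first exact: degC0.
  have : all (fun x : algC => `|x| < 1) (conjugates 0).
    by apply/allP => x /c0 ->; rewrite normr0 ltr01.
  by rewrite all_count size_conj degC0 => /eqP.
split => //.
rewrite /heightC lead_coefX mul1r big_seq big1 => [|x /c0 ->]; last first.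
  by rewrite normr0 max_l // ler01.
by rewrite degC0 rootC1.
Qed.


Lemma root_eq1 d (n : nat) : (0 < d)%N -> d.-root (n%:R : algC) = 1 -> n = 1%N.
Proof.
move=> d0 h; have := rootCK d0 (n%:R : algC); rewrite h expr1n => /eqP.
by rewrite eq_sym pnatr_eq1 => /eqP.
Qed.

Lemma norm_prod_eq (s : seq algC) :
  \prod_(a <- s) `|a| = \prod_(y <- map (fun a : algC => `|a|) s) y.
Proof. by rewrite big_map. Qed.

Lemma F0 d h : Bset 0 d h -> Nroot d h /\ (h = 1 -> in_totient_image d).
Proof.
rewrite /Bset /Aset; case=> z [p [[dz c0] [Zp ->]]].
have ge1 : forall x, x \in conjugates z -> 1 <= `|x|.
  move=> x xc; rewrite (real_leNgt (rpred1 _) (normr_real _)).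
  apply/negP => lt1; move: c0 => /eqP; rewrite -leqn0 leqNgt -has_count => /hasPn.
  by move=> /(_ x xc) /negP.
have [Eh npos] := height_out Zp ge1.
split; first by exists (absz p`_0); rewrite Eh dz.
move=> h1.
have d0 : (0 < degC z)%N := degC_gt0 z.
have n1 : absz p`_0 = 1%N by apply: (root_eq1 d0); rewrite -Eh.
have lp := lead_pos Zp.
set P := \prod_(a <- conjugates z) `|a|.
have E : (lead_coef p)%:~R * P = 1.
  have := congr1 (fun t : algC => `|t|) (coef0_Zmin Zp).
  rewrite /= normrM normrM normrX normrN1 expr1n mul1r normr_prod.
  by rewrite -!intr_norm (gtr0_norm lp) -natr_absz n1 => <-.
have P1 : 1 <= P by rewrite /P norm_prod_eq prod_ge1 // => y /mapP[x /ge1 hx ->].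
have a1 : 1 <= (lead_coef p)%:~R :> algC by rewrite ler1z -gtz0_ge1.
have PE : P = 1.
  apply/eqP; rewrite eq_le P1 andbT -E -[X in X <= _]mul1r.
  by rewrite ler_wpM2r // (le_trans ler01).
have aE : lead_coef p = 1.
  by apply/eqP; rewrite -(eqr_int algC) -[X in _ == X]E PE mulr1.
have alln : forall x, x \in conjugates z -> `|x| = 1.
  move=> x xc; apply/eqP; rewrite eq_le ge1 // andbT -PE /P norm_prod_eq.
  by apply: prod_ge1_elem; [move=> y /mapP[t /ge1 ht ->] | apply: map_f].
have Zz : minCpoly z \is a polyOver Num.int.
  case: Zp => _ Em; apply/polyOverP => i.
  have : (map_poly (fun t : int => t%:~R : algC) p)`_i = (minCpoly z)`_i.
    by rewrite Em aE scale1r.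
  by move <-; rewrite coef_map intr_int.
have [k k0 zk] := kronecker Zz alln.
have [m pm _] := prim_order_exists k0 zk.
exists m; split; first exact: prim_order_gt0 pm.
by rewrite -dz /degC (minCpoly_cyclotomic pm) size_cyclotomic.
Qed.

Lemma F1 d h : Bset d d h -> Nroot d h /\ (h = 1 -> d = 1%N).
Proof.
rewrite /Bset /Aset; case=> z [p [[dz cd] [Zp ->]]].
have lt1 : forall x, x \in conjugates z -> `|x| < 1.
  have : all (fun x : algC => `|x| < 1) (conjugates z).
    by rewrite all_count size_conj dz cd.
  by move/allP.
have [Eh npos] := height_in Zp lt1.
split; first by exists (absz (lead_coef p)); rewrite Eh dz.
move=> h1.
have d0 : (0 < degC z)%N := degC_gt0 z.
have n1 : absz (lead_coef p) = 1%N by apply: (root_eq1 d0); rewrite -Eh.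
have lp := lead_pos Zp.
have aE : lead_coef p = 1 by rewrite -[lead_coef p]gtz0_abs // n1.
have E0 : (p`_0)%:~R = (minCpoly z)`_0.
  case: Zp => _ Em.
  have := congr1 (fun q : {poly algC} => q`_0) Em.
  by rewrite /= aE scale1r coef_map.
have [x0 x0c] : exists x, x \in conjugates z.
  by case: (conjugates z) (size_conj z) d0 => [<-|x s _ _] //; exists x; rewrite mem_head.
have Pl : `|(p`_0)%:~R : algC| < 1.
  rewrite (coef0_Zmin Zp) aE mul1r normrM normrX normrN1 expr1n mul1r normr_prod.
  rewrite norm_prod_eq (le_lt_trans _ (lt1 x0 x0c)) //.
  apply: prod_le1_elem; last exact: map_f.
  by move=> y /mapP[t /lt1 ht ->]; rewrite normr_ge0 ltW.
have p00 : p`_0 = 0.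
  move: Pl; rewrite -intr_norm ltrz1.
  by case: (p`_0) => [[|k]|k] //=.
have : root (minCpoly z) 0 by rewrite rootE horner_coef0 -E0 p00.
case/aut_exists => nu /eqP; rewrite fmorph_eq0 => /eqP z0.
by rewrite -dz z0 degC0.
Qed.

Theorem lemma2p2 (d : nat) (hd : (0 < d)%N) :
  (~ in_totient_image d -> forall h : algC, Bset 0 d h <-> (Nroot d h /\ h <> 1)) /\
  (in_totient_image d -> forall h : algC, Bset 0 d h <-> Nroot d h) /\
  ((1 < d)%N -> forall h : algC, Bset d d h <-> (Nroot d h /\ h <> 1)) /\
  (d = 1%N -> forall h : algC, Bset d d h <-> Nroot d h).
Proof.
have back (h : algC) : Nroot d h -> h <> 1 -> Bset 0 d h /\ Bset d d h.
  case=> n [n0 ->] h1.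
  have n1 : (1 < n)%N.
    rewrite ltn_neqAle n0 andbT; apply/eqP => n1; apply: h1.
    by rewrite -n1 rootC1.
  exact: B_ge2.
split.
  move=> nt h; split.
    by move/F0 => [Nh Ht]; split => // h1; apply: nt; apply: Ht.
  by case=> Nh h1; apply: (back h Nh h1).1.
split.
  move=> tt h; split; first by case/F0.
  move=> Nh; have [->|h1] := eqVneq h 1; first exact: B_tot.
  by apply: (back h Nh (elimN eqP h1)).1.
split.
  move=> d1 h; split.
    move/F1 => [Nh Hd]; split => // h1.
    by move: d1; rewrite (Hd h1).
  by case=> Nh h1; apply: (back h Nh h1).2.
move=> d1 h; split; first by case/F1.
move=> Nh; have [->|h1] := eqVneq h 1; first by rewrite d1; exact: B_d1.
by apply: (back h Nh (elimN eqP h1)).2.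
Qed.
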